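(* Let $s>0$ and let $f:[0,\infty)\to\mathbb R$ be twice differentiable with $\int_0^s (f'(u))^2du<\infty$. Let $\omega(\tau,x)$ be a solution of the heat equation $\omega_\tau=\frac12\omega_{xx}$; in particular, $\omega(\tau,x)=\frac1{2\pi}\int_{-\infty}^\infty \Pi(y)e^{-\frac12 y^2\tau+iyx}\,dy$ for an arbitrary function $\Pi$ for which this integral is well defined. Then $$w(t,a)=e^{\frac12\int_t^s (f'(u))^2du+af'(t)}\,\omega\Big(s-t,\;a+\int_t^s f'(u)\,du\Big)$$ is a solution of $$-w_t(t,a)+f''(t)\,a\,w(t,a)=\frac12 w_{aa}(t,a),\quad (t,a)\in[0,s)\times\mathbb R^+.$$ *)

(* Defs.v *)
From Stdlib Require Import Reals.
From Coquelicot Require Import Coquelicot.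

(* For x in the
   interior of D this is the usual derivative; at a boundary point such
   as 0 for D = [0, +oo) it is the one-sided derivative. *)
Definition is_derive_within {V : NormedModule R_AbsRing}
  (D : R -> Prop) (g : R -> V) (x : R) (l : V) : Prop :=
  filterlim (fun y => scal (/ (y - x)) (minus (g y) (g x)))
    (within (fun y => D y /\ y <> x) (locally x)) (locally l).

Definition halfline (y : R) : Prop := 0 <= y.

Definition heat_solution (om : R -> R -> C) : Prop :=
  exists om_t om_x om_xx : R -> R -> C,
    forall tau x : R, 0 < tau ->
      is_derive (fun tau' => om tau' x) tau (om_t tau x) /\
      is_derive (fun x' => om tau x') x (om_x tau x) /\
      is_derive (fun x' => om_x tau x') x (om_xx tau x) /\
      continuous (fun p : R * R => om_t (fst p) (snd p)) (tau, x) /\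
      continuous (fun p : R * R => om_x (fst p) (snd p)) (tau, x) /\
      om_t tau x = Cmult (RtoC (/ 2)) (om_xx tau x).

Definition w_of (f' : R -> R) (om : R -> R -> C) (s t a : R) : C :=
  Cmult (RtoC (exp (/ 2 * RInt (fun u => f' u ^ 2) t s + a * f' t)))
        (om (s - t) (a + RInt f' t s)).

(* Main.v *)
Require Import Defs.
From Stdlib Require Import Reals Lra.
From Coquelicot Require Import Coquelicot.

Lemma within_eps (g : R -> R) x l : is_derive_within halfline g x l ->
  forall eps, 0 < eps -> exists delta, 0 < delta /\ forall y, Rabs (y - x) < delta ->
   0 <= y -> y <> x -> Rabs ((g y - g x) / (y - x) - l) < eps.
Proof.
  intros H eps He.
  destruct (proj1 (filterlim_locally _ _) H (mkposreal eps He)) as [d Hd].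
  exists d; split; [apply cond_pos|].
  intros y Hy H0 Hyx.
  specialize (Hd y Hy (conj H0 Hyx)).
  change (Rabs (scal (/ (y - x)) (minus (g y) (g x)) - l) < eps) in Hd.
  unfold scal, minus, plus, opp in Hd; simpl in Hd; unfold mult in Hd; simpl in Hd.
  unfold Rdiv; rewrite Rmult_comm; exact Hd.
Qed.

Definition ext (g : R -> R) (x l : R) (y : R) : R :=
  if Rle_dec 0 y then g y else g x + l * (y - x).

Lemma ext_derive g x l : 0 <= x -> is_derive_within halfline g x l ->
  is_derive (ext g x l) x l.
Proof.
  intros Hx H. apply is_derive_Reals. intros eps He.
  destruct (within_eps g x l H eps He) as [d [Hd Hy]].
  exists (mkposreal d Hd). intros h Hh Hhd. simpl in Hhd.
  unfold ext. destruct (Rle_dec 0 x) as [_|]; [|lra].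
  destruct (Rle_dec 0 (x + h)) as [H0|H0].
  - replace h with (x + h - x) at 2 by ring.
    apply Hy; [replace (x + h - x) with h by ring; exact Hhd | exact H0 | lra].
  - replace ((g x + l * (x + h - x) - g x) / h - l) with 0 by (field; exact Hh).
    rewrite Rabs_R0; exact He.
Qed.

Lemma ext_eq g x l y : 0 <= y -> ext g x l y = g y.
Proof. intros H; unfold ext; destruct (Rle_dec 0 y); [reflexivity|lra]. Qed.

Lemma within_pos_derive (g : R -> R) x l : 0 < x -> is_derive_within halfline g x l ->
  is_derive g x l.
Proof.
  intros Hx H. apply (is_derive_ext_loc (ext g x l)).
  - exists (mkposreal x Hx). intros y Hy. apply ext_eq.
    change (Rabs (y - x) < x) in Hy. apply Rabs_def2 in Hy. lra.
  - apply ext_derive; [lra|exact H].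
Qed.

Lemma aux {V: NormedModule R_AbsRing} (k c:R) (a l : V) : k * c = 1 -> scal k (minus a (scal c l)) = minus (scal k a) l.
Proof. intros H. etransitivity; [apply (@scal_minus_distr_l R_Ring (NormedModule.ModuleSpace R_AbsRing V))|].
 f_equal. etransitivity; [apply (@scal_assoc R_Ring (NormedModule.ModuleSpace R_AbsRing V))|]. change (mult k c) with (k * c). rewrite H. apply (@scal_one R_Ring (NormedModule.ModuleSpace R_AbsRing V)). Qed.

Lemma derive_within {V : NormedModule R_AbsRing} (h g : R -> V) t l :
  is_derive h t l -> (forall y, 0 <= y -> h y = g y) -> 0 <= t ->
  is_derive_within halfline g t l.
Proof.
  intros [_ Hd] Heq Ht.
  unfold is_derive_within.
  apply filterlim_locally. intros eps.
  assert (He2 : 0 < eps / 2) by (destruct eps; simpl; lra).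
  specialize (Hd t (fun P HP => HP) (mkposreal _ He2)).
  destruct Hd as [d Hd].
  exists d. intros y Hy [Dy Hyt].
  specialize (Hd y Hy). simpl in Hd.
  rewrite <- !Heq by assumption.
  apply norm_compat1.
  assert (Hn : 0 < Rabs (y - t)) by (apply Rabs_pos_lt; lra).
  apply Rle_lt_trans with (norm (scal (/ (y - t)) (minus (minus (h y) (h t)) (scal (minus y t) l)))).
  { right. f_equal. symmetry. apply aux. change (minus y t) with (y - t). field. lra. }
  eapply Rle_lt_trans; [apply (@norm_scal R_AbsRing V)|].
  change (abs (/ (y - t))) with (Rabs (/ (y - t))).
  rewrite Rabs_inv.
  apply Rle_lt_trans with (/ Rabs (y - t) * (eps / 2 * norm (minus y t))).
  + apply Rmult_le_compat_l; [left; apply Rinv_0_lt_compat; exact Hn| exact Hd].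
  + change (norm (minus y t)) with (Rabs (y - t)).
    replace (/ Rabs (y - t) * (eps / 2 * Rabs (y - t))) with (eps / 2) by (field; lra).
    destruct eps; simpl; lra.
Qed.

Lemma is_derive_fst (h : R -> C) x l : is_derive h x l ->
  is_derive (fun y => fst (h y)) x (fst l).
Proof.
  intros H. unfold is_derive in *.
  eapply filterdiff_ext_lin.
  - apply (filterdiff_comp' (U:=R_NormedModule) (V:=C_R_NormedModule) (W:=R_NormedModule) h (fun p : C => fst p) x (fun y => scal y l) (fun p : C => fst p) H).
    apply filterdiff_linear. apply (@is_linear_fst R_AbsRing R_NormedModule R_NormedModule).
  - intros y. reflexivity.
Qed.

Lemma is_derive_snd (h : R -> C) x l : is_derive h x l ->
  is_derive (fun y => snd (h y)) x (snd l).
Proof.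
  intros H. unfold is_derive in *.
  eapply filterdiff_ext_lin.
  - apply (filterdiff_comp' (U:=R_NormedModule) (V:=C_R_NormedModule) (W:=R_NormedModule) h (fun p : C => snd p) x (fun y => scal y l) (fun p : C => snd p) H).
    apply filterdiff_linear. apply (@is_linear_snd R_AbsRing R_NormedModule R_NormedModule).
  - intros y. reflexivity.
Qed.

Lemma is_derive_pair (h1 h2 : R -> R) x l1 l2 : is_derive h1 x l1 -> is_derive h2 x l2 ->
  is_derive (V := C_R_NormedModule) (fun y => (h1 y, h2 y)) x (l1, l2).
Proof.
  intros H1 H2. unfold is_derive in *.
  eapply filterdiff_ext_lin.
  - apply (filterdiff_comp'_2 h1 h2 (fun a b => (a, b) : C) x _ _ (fun a b => (a, b) : C) H1 H2).
    apply filterdiff_linear.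
    apply (is_linear_prod (K := R_AbsRing) (T := prod_NormedModule R_AbsRing R_NormedModule R_NormedModule) (U := R_NormedModule) (V := R_NormedModule)).
    apply is_linear_fst. apply is_linear_snd.
  - intros y. reflexivity.
Qed.

Lemma chain2 (F Ft : R -> R -> R) (Fx x0 y0 : R) (u v : R -> R) t du dv :
  locally (x0, y0) (fun p : R * R => is_derive (fun z => F z (snd p)) (fst p) (Ft (fst p) (snd p))) ->
  is_derive (fun z => F x0 z) y0 Fx ->
  continuous (fun p : R * R => Ft (fst p) (snd p)) (x0, y0) ->
  u t = x0 -> v t = y0 -> is_derive u t du -> is_derive v t dv ->
  is_derive (fun s => F (u s) (v s)) t (Ft x0 y0 * du + Fx * dv).
Proof.
  intros H1 H2 H3 Hu Hv Du Dv.
  pose proof (is_derive_filterdiff F x0 y0 Ft Fx H1 H2 H3) as HF.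
  assert (HD : differentiable_pt_lim F x0 y0 (Ft x0 y0) Fx).
  { apply filterdiff_differentiable_pt_lim.
    eapply filterdiff_ext_lin; [exact HF|].
    intros [p q]. simpl. unfold plus, scal; simpl. unfold mult; simpl. ring. }
  apply is_derive_Reals.
  apply derivable_pt_lim_comp_2d; [rewrite Hu, Hv; exact HD| |];
  apply is_derive_Reals; assumption.
Qed.
Lemma E_deriv (J G : R->R) a t dJ dG : is_derive J t dJ -> is_derive G t dG ->
  is_derive (fun u => exp(/2*J u + a*G u)) t (exp(/2*J t + a*G t) * (/2*dJ + a*dG)).
Proof. intros HJ HG. auto_derive.
- split; [exists dJ; exact HJ|split; [exists dG; exact HG|exact I]].
- change (Derive (fun x : R => J x) t) with (Derive J t). change (Derive (fun x : R => G x) t) with (Derive G t). rewrite (is_derive_unique _ _ _ HJ), (is_derive_unique _ _ _ HG). ring.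
Qed.
Lemma sq_deriv (F : R -> R) t dF : is_derive F t dF -> is_derive (fun u => F u ^ 2) t (2 * dF * F t).
Proof. intros H. auto_derive. - exists dF; exact H. - change (Derive (fun x : R => F x) t) with (Derive F t). rewrite (is_derive_unique _ _ _ H). ring. Qed.
Lemma lin_deriv (p c t : R) : is_derive (fun z => c + z * p) t p.
Proof. auto_derive. - exact I. - ring. Qed.

Lemma F1_derive (f' f'' : R -> R) :
  (forall t, 0 <= t -> is_derive_within halfline f' t (f'' t)) ->
  forall y, ex_derive (ext f' 0 (f'' 0)) y.
Proof.
  intros Hf y.
  destruct (Rtotal_order y 0) as [Hy|[Hy|Hy]].
  - exists (f'' 0).
    apply (is_derive_ext_loc (fun z => f' 0 + f'' 0 * (z - 0))).
    + exists (mkposreal (- y) ltac:(lra)). intros z Hz.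
      change (Rabs (z - y) < - y) in Hz. apply Rabs_def2 in Hz.
      unfold ext. destruct (Rle_dec 0 z); [lra|reflexivity].
    + auto_derive; [exact I|ring].
  - subst y. exists (f'' 0). apply ext_derive; [lra|apply Hf; lra].
  - exists (f'' y).
    apply (is_derive_ext_loc f').
    + exists (mkposreal y Hy). intros z Hz.
      change (Rabs (z - y) < y) in Hz. apply Rabs_def2 in Hz.
      symmetry; apply ext_eq; lra.
    + apply within_pos_derive; [exact Hy|apply Hf; lra].
Qed.


Lemma om_chain (om om_t om_x : R->R->C) (pr : C -> R)
  (Hpr : forall (h : R -> C) x l, is_derive h x l -> is_derive (fun y => pr (h y)) x (pr l))
  (Hprc : forall z : C, continuous pr z)
  s t (V : R -> R) dV :
  (forall tau x : R, 0 < tau ->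
    is_derive (fun tau' => om tau' x) tau (om_t tau x) /\
    is_derive (fun x' => om tau x') x (om_x tau x) /\
    continuous (fun p : R * R => om_t (fst p) (snd p)) (tau, x)) ->
  t < s -> is_derive V t dV ->
  is_derive (fun u => pr (om (s - u) (V u))) t
    (pr (om_t (s - t) (V t)) * -1 + pr (om_x (s - t) (V t)) * dV).
Proof.
  intros Hh Hts DV.
  apply (chain2 (fun p q => pr (om p q)) (fun p q => pr (om_t p q))
     (pr (om_x (s - t) (V t))) (s - t) (V t) (fun u => s - u) V t (-1) dV).
  - exists (mkposreal (s - t) ltac:(lra)). intros [p q] [Hp _].
    change (Rabs (p - (s - t)) < s - t) in Hp. apply Rabs_def2 in Hp. simpl.
    apply Hpr. apply Hh. lra.
  - apply Hpr. apply Hh. lra.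
  - apply (continuous_comp (fun p : R * R => om_t (fst p) (snd p)) pr).
    + apply Hh. lra.
    + apply Hprc.
  - reflexivity.
  - reflexivity.
  - auto_derive; [exact I|ring].
  - exact DV.
Qed.

Lemma addc_deriv (I : R -> R) a t d : is_derive I t d -> is_derive (fun u => a + I u) t d.
Proof. intros H. auto_derive. - exists d; exact H.
 - change (Derive (fun x : R => I x) t) with (Derive I t). rewrite (is_derive_unique _ _ _ H). ring. Qed.

Lemma fst_cont : forall z : C, continuous (fun p : C => fst p) z.
Proof. intros [p q]. apply continuous_fst. Qed.
Lemma snd_cont : forall z : C, continuous (fun p : C => snd p) z.
Proof. intros [p q]. apply continuous_snd. Qed.




Lemma shift_deriv (g : R -> R) y c (l : R) : is_derive g (y + c) l -> is_derive (fun z => g (z + c)) y l.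
Proof. intros H. auto_derive. - exists l; exact H.
 - change (Derive (fun x : R => g x) (y + c)) with (Derive g (y + c)). rewrite (is_derive_unique _ _ _ H). ring. Qed.

Lemma expl_deriv (c p y : R) : is_derive (fun z => exp (c + z * p)) y (exp (c + y * p) * p).
Proof. auto_derive; [exact I|ring]. Qed.

Lemma deq (f : R -> R) x (l l' : R) : is_derive f x l -> l = l' -> is_derive f x l'.
Proof. intros H E; subst; exact H. Qed.

Theorem theorem3 (s : R) (f f' f'' : R -> R) (om : R -> R -> C) :
  0 < s ->
  (forall t : R, 0 <= t ->
     is_derive_within halfline f t (f' t) /\
     is_derive_within halfline f' t (f'' t)) ->
  ex_RInt (fun u => f' u ^ 2) 0 s ->
  heat_solution om ->
  forall t a : R, 0 <= t < s -> 0 <= a ->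
    exists (dt daa : C) (Wa : R -> C),
      is_derive_within halfline (fun t' => w_of f' om s t' a) t dt /\
      (forall a' : R, is_derive (fun a'' => w_of f' om s t a'') a' (Wa a')) /\
      is_derive Wa a daa /\
      Cplus (Copp dt) (Cmult (RtoC (f'' t * a)) (w_of f' om s t a))
        = Cmult (RtoC (/ 2)) daa.
Proof.
  intros Hs Hf _ Hheat t a [Ht0 Hts] Ha.
  destruct Hheat as [om_t [om_x [om_xx Hh]]].
  assert (Hf2 : forall t, 0 <= t -> is_derive_within halfline f' t (f'' t))
    by (intros; apply Hf; assumption).
  clear Hf.
  set (F1 := ext f' 0 (f'' 0)).
  assert (F1d : forall y, ex_derive F1 y) by (apply F1_derive; exact Hf2).
  assert (F1c : forall y, continuous F1 y) by (intros y; exact (ex_derive_continuous (K:=R_AbsRing) (V:=R_NormedModule) F1 y (F1d y))).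
  assert (F1e : forall y, 0 <= y -> F1 y = f' y) by (intros; apply ext_eq; assumption).
  set (F2 := fun u => F1 u ^ 2).
  assert (F2c : forall y, continuous F2 y).
  { intros y. apply (ex_derive_continuous (K:=R_AbsRing) (V:=R_NormedModule)). destruct (F1d y) as [d Hd].
    eexists. apply (sq_deriv F1 y d Hd). }
  set (I := fun u => RInt F1 u s).
  set (J := fun u => RInt F2 u s).
  assert (DI : is_derive I t (- F1 t)).
  { apply (is_derive_RInt' F1 I t s).
    - apply filter_forall. intros z. apply (RInt_correct (V:=R_CompleteNormedModule)). apply ex_RInt_continuous.
      intros; apply F1c.
    - apply F1c. }
  assert (DJ : is_derive J t (- F2 t)).
  { apply (is_derive_RInt' F2 J t s).
    - apply filter_forall. intros z. apply (RInt_correct (V:=R_CompleteNormedModule)). apply ex_RInt_continuous.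
      intros; apply F2c.
    - apply F2c. }
  set (G := ext f' t (f'' t)).
  assert (DG : is_derive G t (f'' t)) by (apply ext_derive; [lra|apply Hf2; lra]).
  set (E := fun u => exp (/2 * J u + a * G u)).
  assert (DE : is_derive E t (E t * (/2 * (- F2 t) + a * f'' t)))
    by (apply E_deriv; assumption).
  assert (Hh' : forall tau x : R, 0 < tau ->
    is_derive (fun tau' => om tau' x) tau (om_t tau x) /\
    is_derive (fun x' => om tau x') x (om_x tau x) /\
    continuous (fun p : R * R => om_t (fst p) (snd p)) (tau, x)).
  { intros tau x Htau. destruct (Hh tau x Htau) as (H1&H2&_&H4&_). auto. }
  assert (DV : is_derive (fun u => a + I u) t (- F1 t)) by (apply addc_deriv; exact DI).
  pose proof (om_chain om om_t om_x (fun p => fst p) is_derive_fst fst_cont s t _ _ Hh' Hts DV) as DOf.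
  pose proof (om_chain om om_t om_x (fun p => snd p) is_derive_snd snd_cont s t _ _ Hh' Hts DV) as DOs.
  simpl in DOf, DOs.
  set (W' := fun u => (E u * fst (om (s - u) (a + I u)), E u * snd (om (s - u) (a + I u))) : C).
  assert (DW := is_derive_pair _ _ t _ _ (Derive.is_derive_mult _ _ t _ _ DE DOf) (Derive.is_derive_mult _ _ t _ _ DE DOs)).
  assert (EqI : forall y, 0 <= y -> I y = RInt f' y s).
  { intros y Hy. unfold I. apply RInt_ext. intros x [Hx _].
    assert (0 <= Rmin y s) by (apply Rmin_glb; lra). apply F1e; lra. }
  assert (EqJ : forall y, 0 <= y -> J y = RInt (fun u => f' u ^ 2) y s).
  { intros y Hy. unfold J. apply RInt_ext. intros x [Hx _].
    assert (0 <= Rmin y s) by (apply Rmin_glb; lra). unfold F2. rewrite F1e; [reflexivity|lra]. }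
  assert (EqW : forall y, 0 <= y -> W' y = w_of f' om s y a).
  { intros y Hy. unfold W', w_of, E. rewrite EqI, EqJ by exact Hy.
    unfold G. rewrite ext_eq by exact Hy.
    destruct (om (s - y) (a + RInt f' y s)) as [p q]. unfold Cmult, RtoC. simpl. f_equal; ring. }
  assert (Dt := derive_within W' _ t _ DW EqW Ht0).
  set (c0 := / 2 * RInt (fun u => f' u ^ 2) t s).
  set (I0 := RInt f' t s).
  set (p := f' t).
  set (tau := s - t).
  assert (Htau : 0 < tau) by (unfold tau; lra).
  assert (Ew : forall z, w_of f' om s t z =
     (exp (c0 + z * p) * fst (om tau (z + I0)), exp (c0 + z * p) * snd (om tau (z + I0)))).
  { intros z. unfold w_of. fold c0 I0 p tau. rewrite (Rplus_comm z I0).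
    destruct (om tau (I0 + z)) as [u v]. unfold Cmult, RtoC. simpl. f_equal; ring. }
  assert (Hox : forall z, is_derive (fun x => om tau x) z (om_x tau z)) by (intros; apply Hh; exact Htau).
  assert (Hoxx : forall z, is_derive (fun x => om_x tau x) z (om_xx tau z)) by (intros; apply Hh; exact Htau).
  set (Wa := fun z => (exp (c0 + z * p) * (p * fst (om tau (z + I0)) + fst (om_x tau (z + I0))),
                       exp (c0 + z * p) * (p * snd (om tau (z + I0)) + snd (om_x tau (z + I0)))) : C).
  exists (E t * (/ 2 * - F2 t + a * f'' t) * fst (om (s - t) (a + I t)) +
       E t * (fst (om_t (s - t) (a + I t)) * -1 + fst (om_x (s - t) (a + I t)) * - F1 t),
       E t * (/ 2 * - F2 t + a * f'' t) * snd (om (s - t) (a + I t)) +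
       E t * (snd (om_t (s - t) (a + I t)) * -1 + snd (om_x (s - t) (a + I t)) * - F1 t)).
  exists (exp (c0 + a * p) * p * (p * fst (om tau (a + I0)) + fst (om_x tau (a + I0))) +
          exp (c0 + a * p) * (p * fst (om_x tau (a + I0)) + fst (om_xx tau (a + I0))),
          exp (c0 + a * p) * p * (p * snd (om tau (a + I0)) + snd (om_x tau (a + I0))) +
          exp (c0 + a * p) * (p * snd (om_x tau (a + I0)) + snd (om_xx tau (a + I0)))).
  exists Wa.
  split; [exact Dt|].
  split.
  { intros a'. eapply is_derive_ext; [intros z; symmetry; apply Ew|].
    unfold Wa. apply is_derive_pair.
    - eapply deq; [apply (Derive.is_derive_mult _ _ a' _ _ (expl_deriv c0 p a')
        (shift_deriv (fun x => fst (om tau x)) a' I0 _ (is_derive_fst _ _ _ (Hox (a' + I0)))))|].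
      simpl. ring.
    - eapply deq; [apply (Derive.is_derive_mult _ _ a' _ _ (expl_deriv c0 p a')
        (shift_deriv (fun x => snd (om tau x)) a' I0 _ (is_derive_snd _ _ _ (Hox (a' + I0)))))|].
      simpl. ring. }
  split.
  { unfold Wa. apply is_derive_pair.
    - assert (Hin : is_derive (fun z => p * fst (om tau (z + I0)) + fst (om_x tau (z + I0))) a
          (p * fst (om_x tau (a + I0)) + fst (om_xx tau (a + I0)))).
      { apply (is_derive_plus (fun z => p * fst (om tau (z + I0))) (fun z => fst (om_x tau (z + I0)))).
        + apply is_derive_scal. apply (shift_deriv (fun x => fst (om tau x)) a I0 _ (is_derive_fst _ _ _ (Hox (a + I0)))).
        + apply (shift_deriv (fun x => fst (om_x tau x)) a I0 _ (is_derive_fst _ _ _ (Hoxx (a + I0)))). }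
      eapply deq; [apply (Derive.is_derive_mult _ _ a _ _ (expl_deriv c0 p a) Hin)|].
      simpl. ring.
    - assert (Hin : is_derive (fun z => p * snd (om tau (z + I0)) + snd (om_x tau (z + I0))) a
          (p * snd (om_x tau (a + I0)) + snd (om_xx tau (a + I0)))).
      { apply (is_derive_plus (fun z => p * snd (om tau (z + I0))) (fun z => snd (om_x tau (z + I0)))).
        + apply is_derive_scal. apply (shift_deriv (fun x => snd (om tau x)) a I0 _ (is_derive_snd _ _ _ (Hox (a + I0)))).
        + apply (shift_deriv (fun x => snd (om_x tau x)) a I0 _ (is_derive_snd _ _ _ (Hoxx (a + I0)))). }
      eapply deq; [apply (Derive.is_derive_mult _ _ a _ _ (expl_deriv c0 p a) Hin)|].
      simpl. ring. }
      assert (e1 : I t = I0) by (rewrite EqI by exact Ht0; reflexivity).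
  assert (e2 : F1 t = p) by (apply F1e; exact Ht0).
  assert (e3 : F2 t = p ^ 2) by (unfold F2; rewrite e2; reflexivity).
  assert (e4 : E t = exp (c0 + a * p)).
  { unfold E. rewrite EqJ by exact Ht0. unfold G. rewrite ext_eq by exact Ht0. reflexivity. }
  rewrite e1, e2, e3, e4, Ew. fold tau.
  destruct (Hh tau (a + I0) Htau) as (_&_&_&_&_&Hq).
  revert Hq.
  destruct (om tau (a + I0)) as [o1 o2].
  destruct (om_x tau (a + I0)) as [x1 x2].
  destruct (om_xx tau (a + I0)) as [y1 y2].
  destruct (om_t tau (a + I0)) as [z1 z2].
  unfold Cmult, Cplus, Copp, RtoC. simpl. intros Hq. injection Hq as Hq1 Hq2.
  rewrite Hq1, Hq2. apply (f_equal2 (@pair R R)); field.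
Qed.
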